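(* Let $n,m\in\mathbb N$, $d:=\min\{n,m\}$, fix $\alpha\in[1,d]$, and write $k:=\lfloor\alpha\rfloor$, $\theta:=\alpha-k\in[0,1)$. Let $\Phi:\mathbb M_n\to\mathbb M_m$ be linear. The following are equivalent: (i) $\Phi$ is $\alpha$-superpositive, i.e. $C_\Phi\in\mathsf K_\alpha$; (ii) there exist $N\in\mathbb N$ and $\alpha$-admissible matrices $A_1,\dots,A_N\in\mathbb M_{m,n}$ such that $\Phi(X)=\sum_{i=1}^N A_iXA_i^\ast$ for all $X\in\mathbb M_n$; (iii) there exist $N\in\mathbb N$, vectors $\psi_1,\dots,\psi_N\in\mathcal V_\alpha$ and scalars $t_1,\dots,t_N>0$ such that $C_\Phi=\sum_{i=1}^N t_i\psi_i\psi_i^\ast$. Moreover, in (iii) one may choose $N\le (nm)^2$. In particular, the $\alpha$-superpositive maps are precisely the completely positive maps admitting a Kraus decomposition with $\alpha$-admissible Kraus operators.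
   Context: Standard bases: $\{e_i\}$ of $\mathbb C^n$, $\{f_j\}$ of $\mathbb C^m$; $E_{ij}$ are the matrix units of $\mathbb M_n$. The Choi matrix of a linear $\Phi:\mathbb M_n\to\mathbb M_m$ is $C_\Phi=\sum_{i,j=1}^nE_{ij}\otimes\Phi(E_{ij})\in\mathbb M_n\otimes\mathbb M_m$. For $\psi=\sum_{i,j}a_{ij}e_i\otimes f_j\in\mathbb C^n\otimes\mathbb C^m$, its Schmidt coefficients $s_1(\psi)\ge\dots\ge s_d(\psi)\ge0$ are the singular values of the $n\times m$ matrix $[a_{ij}]$. For $\alpha\in[1,d]$ with $k=\lfloor\alpha\rfloor$, $\theta=\alpha-k$, $r=\lceil\alpha\rceil$: a unit vector $\psi$ is $\alpha$-admissible if $s_j(\psi)=0$ for all $j\ge r+1$ and, when $\theta>0$, $s_{k+1}(\psi)\le\frac{\theta}{k}\sum_{j=1}^ks_j(\psi)$; $\mathcal V_\alpha$ denotes the set of such unit vectors. A matrix $A\in\mathbb M_{m,n}$ with singular values $\sigma_1(A)\ge\sigma_2(A)\ge\cdots$ is $\alpha$-admissible if $\sigma_j(A)=0$ for all $j\ge r+1$ and, when $\theta>0$, $\sigma_{k+1}(A)\le\frac{\theta}{k}\sum_{j=1}^k\sigma_j(A)$. $\mathsf K_\alpha$ is the closure of the convex cone $\{\sum_i t_i\psi_i\psi_i^\ast: t_i\ge0,\psi_i\in\mathcal V_\alpha\}$ (finite sums) in $\mathbb M_n\otimes\mathbb M_m$. *)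

(* Defs.v *)
(* The tensor product
   M_n (x) M_m is identified with M_(n*m) via the Kronecker product  tensmx
   (mathcomp-real-closed mxtens), i.e. e_i (x) f_j  <->  index  i*m + j. *)
From HB Require Import structures.
From mathcomp Require Import all_boot all_order all_algebra.
From mathcomp Require Import reals.
From mathcomp Require Import complex mxtens.
From mathcomp Require Export spectral.
Set Implicit Arguments. Unset Strict Implicit. Unset Printing Implicit Defensive.
Import Order.TTheory GRing.Theory Num.Theory.
Local Open Scope ring_scope.
Local Open Scope complex_scope.
Local Open Scope sesquilinear_scope.

Section Defs.
Variable R : realType.
Local Notation C := R[i].

(* Singular values of A in M_(p,q), as a sequence s_0 >= s_1 >= ... >= 0
   (0-based; the paper's s_j is our s (j-1)), padded by zeros beyond
   min(p,q):  A = U D V^* with U, V unitary and D the p x q "diagonal"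
   matrix with diagonal entries s_0, ..., s_(min(p,q)-1). *)
Definition singular_values (p q : nat) (A : 'M[C]_(p, q)) (s : nat -> R) : Prop :=
  (forall i j : nat, (i <= j)%N -> s j <= s i) /\
  (forall j : nat, 0 <= s j) /\
  (forall j : nat, (minn p q <= j)%N -> s j = 0) /\
  exists (U : 'M[C]_p) (V : 'M[C]_q),
    U \is unitarymx /\ V \is unitarymx /\
    A = U *m (\matrix_(i < p, j < q) (if (i == j :> nat) then (s i)%:C else 0))
          *m V ^t*.

(* alpha-admissibility condition on a nonincreasing sequence of singular
   values / Schmidt coefficients;  k = floor alpha, theta = alpha - k,
   r = ceil alpha.  "s_j = 0 for all j >= r+1" (1-based) becomes
   "s j = 0 for all 0-based j with r <= j". *)
Definition admissible_seq (alpha : R) (s : nat -> R) : Prop :=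
  let k := Num.truncn alpha in
  let theta := alpha - k%:R in
  (forall j : nat, Num.ceil alpha <= j%:Z -> s j = 0) /\
  (0 < theta -> s k <= theta / k%:R * \sum_(j < k) s j).

Definition admissible_mx (alpha : R) (p q : nat) (A : 'M[C]_(p, q)) : Prop :=
  exists s, singular_values A s /\ admissible_seq alpha s.

Definition coef_mx (n m : nat) (psi : 'cV[C]_(n * m)) : 'M[C]_(n, m) :=
  \matrix_(i < n, j < m) psi (mxtens_index (i, j)) 0.

Definition schmidt_coefs (n m : nat) (psi : 'cV[C]_(n * m)) (s : nat -> R) :=
  singular_values (coef_mx psi) s.

Definition unit_vector (N : nat) (psi : 'cV[C]_N) : Prop :=
  (psi ^t* *m psi) 0 0 = 1.

Definition V_alpha (alpha : R) (n m : nat) (psi : 'cV[C]_(n * m)) : Prop :=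
  unit_vector psi /\
  exists s, schmidt_coefs psi s /\ admissible_seq alpha s.

Definition cone_alpha (alpha : R) (n m : nat) (X : 'M[C]_(n * m)) : Prop :=
  exists (N : nat) (t : 'I_N -> R) (psi : 'I_N -> 'cV[C]_(n * m)),
    (forall i, 0 <= t i) /\ (forall i, V_alpha alpha (psi i)) /\
    X = \sum_(i < N) (t i)%:C *: (psi i *m (psi i) ^t*).

(* K_alpha : topological closure of cone_alpha in M_(n*m)(C)
   (finite-dimensional, so any norm; we use the entrywise max-norm). *)
Definition K_alpha (alpha : R) (n m : nat) (X : 'M[C]_(n * m)) : Prop :=
  forall eps : R, 0 < eps ->
    exists Y : 'M[C]_(n * m), cone_alpha alpha Y /\
      forall i j, `|X i j - Y i j| < eps%:C.

Definition choi (n m : nat) (Phi : 'M[C]_n -> 'M[C]_m) : 'M[C]_(n * m) :=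
  \sum_(i < n) \sum_(j < n) tensmx (delta_mx i j) (Phi (delta_mx i j)).

End Defs.

(* Main.v *)
Require Import Defs.
From HB Require Import structures.
From mathcomp Require Import all_boot all_order all_algebra.
From mathcomp Require Import reals.
From mathcomp Require Import complex mxtens spectral.
From mathcomp Require Import all_classical topology normedtype.
Import Order.TTheory GRing.Theory Num.Theory.
Import numFieldTopology.Exports numFieldNormedType.Exports.
Local Open Scope ring_scope.
Local Open Scope complex_scope.
Local Open Scope sesquilinear_scope.
Set Implicit Arguments. Unset Strict Implicit. Unset Printing Implicit Defensive.

Lemma trmxC_1_aux : True. Proof. by []. Qed.

Section PartA.
Variable R : realType.
Local Notation C := R[i].

Lemma conjCE (x : C) : Num.conj_op x = conjc x. Proof. by []. Qed.

Lemma choi_entry n m (Phi : 'M[C]_n -> 'M[C]_m) i a j b :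
  choi Phi (mxtens_index (i, a)) (mxtens_index (j, b)) = Phi (delta_mx i j) a b.
Proof.
rewrite /choi summxE.
under eq_bigr => i' _ do (rewrite summxE; under eq_bigr => j' _ do rewrite tensmxE mxE).
rewrite pair_bigA (bigD1 (i, j)) //= big1 => [|[i' j'] /= ne]; last first.
  move: ne; rewrite xpair_eqE negb_and => /orP[] /negbTE ne;
  by rewrite [i == i']eq_sym [j == j']eq_sym ne ?andbF mul0r.
by rewrite !eqxx mul1r addr0.
Qed.

Lemma mul_mx_delta_entry p q r (A : 'M[C]_(p, q)) (i : 'I_q) (j : 'I_r) a k :
  (A *m delta_mx i j) a k = A a i * (k == j)%:R.
Proof.
rewrite !mxE (bigD1 i) //= big1 => [|c ne]; last by rewrite mxE (negbTE ne) mulr0.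
by rewrite mxE eqxx addr0.
Qed.

Lemma kraus_delta_entry n m (A : 'M[C]_(m, n)) i j a b :
  (A *m delta_mx i j *m A ^t*) a b = A a i * (A b j)^*%R.
Proof.
rewrite [LHS]mxE (bigD1 j) //= big1 => [|k ne].
  by rewrite mul_mx_delta_entry eqxx mulr1 !mxE addr0.
by rewrite mul_mx_delta_entry (negbTE ne) mulr0 mul0r.
Qed.

Lemma lin_expand n m (Phi : {linear 'M[C]_n -> 'M[C]_m}) X :
  Phi X = \sum_i \sum_j X i j *: Phi (delta_mx i j).
Proof.
rewrite {1}[X]matrix_sum_delta linear_sum; apply: eq_bigr => i _.
rewrite linear_sum; apply: eq_bigr => j _; by rewrite linearZ.
Qed.

Lemma kraus_expand n m N (A : 'I_N -> 'M[C]_(m, n)) X :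
  \sum_(l < N) A l *m X *m (A l) ^t* =
  \sum_i \sum_j X i j *: \sum_(l < N) A l *m delta_mx i j *m (A l) ^t*.
Proof.
rewrite {1}[X]matrix_sum_delta.
under eq_bigr => l _ do rewrite mulmx_sumr mulmx_suml.
rewrite exchange_big; apply: eq_bigr => i _.
under eq_bigr => l _ do rewrite mulmx_sumr mulmx_suml.
rewrite exchange_big; apply: eq_bigr => j _.
rewrite scaler_sumr; apply: eq_bigr => l _.
by rewrite -scalemxAr -scalemxAl.
Qed.

Definition diagsv p q (s : nat -> R) : 'M[C]_(p, q) :=
  \matrix_(i < p, j < q) (if (i == j :> nat) then (s i)%:C else 0).

Lemma svE p q (A : 'M[C]_(p, q)) s : singular_values A s <->
  [/\ (forall i j : nat, (i <= j)%N -> s j <= s i),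
      (forall j : nat, 0 <= s j),
      (forall j : nat, (minn p q <= j)%N -> s j = 0) &
      exists U V, [/\ U \is unitarymx, V \is unitarymx &
        A = U *m diagsv p q s *m V ^t*]].
Proof.
split.
  by case=> h1 [h2 [h3 [U [V [hU [hV hA]]]]]]; split=> //; exists U, V.
by case=> h1 h2 h3 [U [V [hU hV hA]]]; split=> //; split=> //; split=> //;
  exists U, V.
Qed.

Lemma sv_tr p q (A : 'M[C]_(p, q)) s : singular_values A s -> singular_values A^T s.
Proof.
move/svE=> [h1 h2 h3 [U [V [hU hV ->]]]]; apply/svE; split=> //.
  by move=> j; rewrite minnC; exact: h3.
exists (V ^ Num.Def.conjC), (U ^ Num.Def.conjC); rewrite !conjC_unitary; split=> //.
rewrite !trmx_mul mulmxA; congr (_ *m _ *m _).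
- by apply/matrixP => x y; rewrite !mxE.
- apply/matrixP => x y; rewrite !mxE eq_sym.
  by case: eqP => // ->.
- by apply/matrixP => x y; rewrite !mxE conjCK.
Qed.

Lemma sv_scale p q (A : 'M[C]_(p, q)) s c : 0 <= c ->
  singular_values A s -> singular_values (c%:C *: A) (fun j => c * s j).
Proof.
move=> c0 /svE[h1 h2 h3 [U [V [hU hV ->]]]]; apply/svE; split.
- by move=> i j ij; rewrite ler_wpM2l // h1.
- by move=> j; rewrite mulr_ge0.
- by move=> j hj; rewrite h3 // mulr0.
exists U, V; split=> //.
rewrite scalemxAl scalemxAr; congr (_ *m _ *m _).
apply/matrixP => x y; rewrite !mxE; case: ifP => _; last by rewrite mulr0.
by rewrite rmorphM.
Qed.

Lemma adm_scale alpha (s : nat -> R) c : 0 < c ->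
  admissible_seq alpha s -> admissible_seq alpha (fun j => c * s j).
Proof.
move=> c0 [h1 h2]; split.
  by move=> j hj; rewrite h1 // mulr0.
move=> /h2 h; rewrite -mulr_sumr mulrCA ler_pM2l //.
Qed.

Lemma cRe_add (x y : C) : complex.Re (x + y) = complex.Re x + complex.Re y.
Proof. by case: x; case: y. Qed.
Lemma cIm_add (x y : C) : complex.Im (x + y) = complex.Im x + complex.Im y.
Proof. by case: x; case: y. Qed.
Lemma cRe_sum I (r : seq I) (P : pred I) (F : I -> C) :
  complex.Re (\sum_(i <- r | P i) F i) = \sum_(i <- r | P i) complex.Re (F i).
Proof. exact: (big_morph _ cRe_add). Qed.
Lemma cIm_sum I (r : seq I) (P : pred I) (F : I -> C) :
  complex.Im (\sum_(i <- r | P i) F i) = \sum_(i <- r | P i) complex.Im (F i).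
Proof. exact: (big_morph _ cIm_add). Qed.
Lemma cRe_scaleR (c : R) (z : C) : complex.Re (c%:C * z) = c * complex.Re z.
Proof. by case: z => a b /=; rewrite mul0r subr0. Qed.
Lemma cIm_scaleR (c : R) (z : C) : complex.Im (c%:C * z) = c * complex.Im z.
Proof. by case: z => a b /=; rewrite mul0r addr0. Qed.
Lemma cRe_conj (z : C) : complex.Re (z^*%R) = complex.Re z.
Proof. by case: z. Qed.
Lemma cIm_conj (z : C) : complex.Im (z^*%R) = - complex.Im z.
Proof. by case: z. Qed.
Lemma complex_ext (z w : C) : complex.Re z = complex.Re w -> complex.Im z = complex.Im w -> z = w.
Proof. by case: z; case: w => a b c d /= -> ->. Qed.
Lemma conj_real (c : R) : (c%:C)^*%R = c%:C :> C.
Proof. exact: conjc_real. Qed.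

Definition hc K (M : 'M[C]_K) : 'rV[R]_(K * K) :=
  \row_k (if ((mxtens_unindex k).1 <= (mxtens_unindex k).2)%N
          then complex.Re (M (mxtens_unindex k).1 (mxtens_unindex k).2)
          else complex.Im (M (mxtens_unindex k).2 (mxtens_unindex k).1)).

Lemma hc_index K (M : 'M[C]_K) a b :
  hc M 0 (mxtens_index (a, b)) =
  if (a <= b)%N then complex.Re (M a b) else complex.Im (M b a).
Proof. by rewrite mxE mxtens_indexK. Qed.

Lemma hc_sum K N (c : 'I_N -> R) (P : 'I_N -> 'M[C]_K) k :
  hc (\sum_l (c l)%:C *: P l) 0 k = \sum_l c l * hc (P l) 0 k.
Proof.
rewrite mxE; case: ifP => h; rewrite summxE ?cRe_sum ?cIm_sum;
  apply: eq_bigr => l _; rewrite !mxE h ?cRe_scaleR ?cIm_scaleR //.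
Qed.

Lemma herm_hc0 K (M : 'M[C]_K) :
  (forall a b, M a b = (M b a)^*%R) -> hc M = 0 -> M = 0.
Proof.
move=> hM h0.
have hle (a b : 'I_K) : (a <= b)%N -> M a b = 0.
  move=> ab; apply: complex_ext => /=.
    by move: (congr1 (fun v : 'rV[R]_(K * K) => v 0 (mxtens_index (a, b))) h0);
       rewrite hc_index ab mxE.
  rewrite leq_eqVlt in ab; case/orP: ab => [/eqP ab | ab].
    have ab' : a = b by apply: val_inj.
    subst b; have := congr1 (@complex.Im R) (hM a a); rewrite cIm_conj.
    by move/eqP; rewrite -subr_eq0 opprK -mulr2n mulrn_eq0 /= => /eqP.
  move: (congr1 (fun v : 'rV[R]_(K * K) => v 0 (mxtens_index (b, a))) h0).
  by rewrite hc_index leqNgt ab mxE.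
apply/matrixP => a b; rewrite mxE; case: (leqP a b) => ab; first exact: hle.
by rewrite hM hle ?(ltnW ab) // rmorph0.
Qed.

Lemma outer_herm K N (d : 'I_N -> R) (psi : 'I_N -> 'cV[C]_K) a b :
  (\sum_l (d l)%:C *: (psi l *m (psi l)^t*)) a b =
  ((\sum_l (d l)%:C *: (psi l *m (psi l)^t*)) b a)^*%R.
Proof.
rewrite !summxE rmorph_sum; apply: eq_bigr => l _.
rewrite !mxE !big_ord1 !mxE rmorphM /= rmorphM /= conjCK conj_real.
by rewrite [_ * (_^*%R)]mulrC.
Qed.

Definition rep K N (t : 'I_N -> R) (psi : 'I_N -> 'cV[C]_K) :=
  \sum_(l < N) (t l)%:C *: (psi l *m (psi l)^t*).

Lemma rep_lift K N (t : 'I_N.+1 -> R) (psi : 'I_N.+1 -> 'cV[C]_K) l0 :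
  t l0 = 0 -> rep t psi = rep (fun j => t (lift l0 j)) (fun j => psi (lift l0 j)).
Proof. by move=> h; rewrite /rep (bigD1_ord l0) //= h scale0r add0r. Qed.

Lemma compress K (Q : 'cV[C]_K -> Prop) N (t : 'I_N -> R) (psi : 'I_N -> 'cV[C]_K) :
  (forall l, 0 <= t l) -> (forall l, Q (psi l)) ->
  exists N' (t' : 'I_N' -> R) (psi' : 'I_N' -> 'cV[C]_K),
    [/\ (N' <= N)%N, (forall l, 0 < t' l), (forall l, Q (psi' l)) &
        rep t psi = rep t' psi'].
Proof.
elim: N t psi => [|N IH] t psi t0 Q0.
  by exists 0%N, t, psi; split => // -[].
case: (pickP (fun l => t l == 0)) => [l0 /eqP tl0 | hpos].
  have [N' [t' [psi' [h1 h2 h3 h4]]]] :=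
    IH (fun j => t (lift l0 j)) (fun j => psi (lift l0 j)) (fun j => t0 _) (fun j => Q0 _).
  exists N', t', psi'; split => //; first exact: leqW.
  by rewrite (rep_lift _ tl0).
exists N.+1, t, psi; split => // l.
by rewrite lt_def t0 andbT hpos.
Qed.

Lemma caratheodory K (Q : 'cV[C]_K -> Prop) N (t : 'I_N -> R) (psi : 'I_N -> 'cV[C]_K) :
  (forall l, 0 <= t l) -> (forall l, Q (psi l)) ->
  exists N' (t' : 'I_N' -> R) (psi' : 'I_N' -> 'cV[C]_K),
    [/\ (N' <= K * K)%N, (forall l, 0 <= t' l), (forall l, Q (psi' l)) &
        rep t psi = rep t' psi'].
Proof.
elim/ltn_ind: N t psi => N IH t psi t0 Q0.
case: (leqP N (K * K)) => hN; first by exists N, t, psi.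
case: N IH t psi t0 Q0 hN => [|N] IH t psi t0 Q0 hN //.
pose P l := psi l *m (psi l)^t*.
pose B : 'M[R]_(N.+1, K * K) := \matrix_(l, k) hc (P l) 0 k.
have rk : (0 < \rank (kermx B))%N.
  by rewrite mxrank_ker subn_gt0 (leq_ltn_trans (rank_leq_col B)).
have [r hr] : exists r, row r (kermx B) != 0.
  apply/existsP; apply: contraTT rk; rewrite negb_exists => /forallP hall.
  suff -> : kermx B = 0 by rewrite mxrank0.
  by apply/row_matrixP => r; rewrite row0; apply/eqP; rewrite -[_ == _]negbK hall.
pose c := row r (kermx B).
have cB : c *m B = 0 by rewrite /c -row_mul mulmx_ker row0.
have hsum : \sum_l (c 0 l)%:C *: P l = 0.
  apply: herm_hc0; first by move=> a b; rewrite /P; exact: outer_herm.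
  apply/rowP => k; rewrite hc_sum mxE.
  have := congr1 (fun v : 'rV[R]_(K * K) => v 0 k) cB; rewrite !mxE => E.
  transitivity (\sum_j c 0 j * B j k); last exact: E.
  by apply: eq_bigr => l _; rewrite [B l k]mxE.
have [l1 hl1] : exists l1, c 0 l1 != 0.
  apply/existsP; apply: contraTT hr; rewrite negb_exists => /forallP hall.
  rewrite negbK; apply/eqP/rowP => l; apply/eqP.
  by have := hall l; rewrite negbK /c !mxE.
pose sg : R := if 0 < c 0 l1 then 1 else -1.
pose cf l := sg * c 0 l.
have hsum' : \sum_l (cf l)%:C *: P l = 0.
  transitivity (sg%:C *: \sum_l (c 0 l)%:C *: P l); last by rewrite hsum scaler0.
  rewrite scaler_sumr; apply: eq_bigr => l _; by rewrite scalerA -rmorphM.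
have cf1 : 0 < cf l1.
  rewrite /cf /sg; case: ifP => h; first by rewrite mul1r.
  by rewrite mulN1r oppr_gt0 lt_neqAle hl1 /= leNgt h.
pose l0 := [arg min_(l < l1 | 0 < cf l) (t l / cf l)]%O.
have [cf0 hmin] : 0 < cf l0 /\ forall j, 0 < cf j -> t l0 / cf l0 <= t j / cf j.
  by rewrite /l0; case: arg_minP => // i hi hmin; split=> // j /hmin.
pose lam := t l0 / cf l0.
have lam0 : 0 <= lam by rewrite divr_ge0 // ltW.
pose t' l := t l - lam * cf l.
have t'0 l : 0 <= t' l.
  rewrite subr_ge0 /t'; case: (ltP 0 (cf l)) => h.
    by rewrite -ler_pdivlMr // hmin.
  by rewrite (le_trans _ (t0 l)) // mulr_ge0_le0.
have t'l0 : t' l0 = 0 by rewrite /t' /lam divfK ?subrr // gt_eqF.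
have hrep : rep t psi = rep t' psi.
  rewrite /rep /t'; under [RHS]eq_bigr => l _ do
    rewrite rmorphB /= scalerBl rmorphM /= -scalerA.
  by rewrite sumrB -scaler_sumr hsum' scaler0 subr0.
have [N' [t'' [psi'' [h1 h2 h3 h4]]]] :=
  IH N (ltnSn N) (fun j => t' (lift l0 j)) (fun j => psi (lift l0 j))
    (fun j => t'0 _) (fun j => Q0 _).
exists N', t'', psi''; split => //.
by rewrite hrep (rep_lift _ t'l0).
Qed.

Lemma outer_entry K (u v : 'cV[C]_K) a b : (u *m v^t*) a b = u a 0 * (v b 0)^*%R.
Proof. by rewrite !mxE big_ord1 !mxE. Qed.

Definition sqn K (u : 'cV[C]_K) : C := (u^t* *m u) 0 0.

Lemma sqnE K (u : 'cV[C]_K) : sqn u = \sum_k (u k 0)^*%R * u k 0.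
Proof. by rewrite /sqn mxE; apply: eq_bigr => k _; rewrite !mxE. Qed.

Lemma sqn_ge0 K (u : 'cV[C]_K) : 0 <= sqn u.
Proof. by rewrite sqnE sumr_ge0 // => k _; rewrite mulrC mul_conjC_ge0. Qed.

Lemma sqn_eq0 K (u : 'cV[C]_K) : sqn u = 0 -> u = 0.
Proof.
rewrite sqnE => h; apply/matrixP => k j; rewrite (ord1 j) mxE.
have hge : forall i : 'I_K, true -> 0 <= (u i 0)^*%R * u i 0.
  by move=> i _; rewrite mulrC mul_conjC_ge0.
have := psumr_eq0P hge h (i := k) isT.
by rewrite mulrC => /eqP; rewrite mul_conjC_eq0 => /eqP.
Qed.

Lemma trmxC_scale p q (c : R) (A : 'M[C]_(p, q)) : (c%:C *: A)^t* = c%:C *: A^t*.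
Proof. by apply/matrixP => a b; rewrite !mxE rmorphM /= conj_real. Qed.

Lemma ge0_complex (q : C) : 0 <= q -> q = (complex.Re q)%:C /\ 0 <= complex.Re q.
Proof.
rewrite lecE => /andP[/eqP h1 h2]; split => //.
by apply: complex_ext => //=; rewrite -h1.
Qed.

Lemma normalize K (u : 'cV[C]_K) : u != 0 -> exists r : R, [/\ 0 < r,
  unit_vector ((r^-1)%:C *: u) &
  u *m u^t* = (r ^+ 2)%:C *: (((r^-1)%:C *: u) *m ((r^-1)%:C *: u)^t*)].
Proof.
move=> u0; have [hq ha] := ge0_complex (sqn_ge0 u).
have a0 : 0 < complex.Re (sqn u).
  rewrite lt_def ha andbT; apply: contra u0 => /eqP a0.
  by apply/eqP/sqn_eq0; rewrite hq a0.
pose r := Num.sqrt (complex.Re (sqn u)).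
have r0 : 0 < r by rewrite sqrtr_gt0.
have rr : r ^+ 2 = complex.Re (sqn u) by rewrite sqr_sqrtr // ltW.
exists r; split => //.
  rewrite /unit_vector trmxC_scale -scalemxAl -scalemxAr.
  rewrite scalerA.
  have -> : (((r^-1)%:C * (r^-1)%:C) *: (u ^t* *m u)) 0 0 = ((r^-1)%:C * (r^-1)%:C) * sqn u.
    by rewrite [LHS]mxE.
  rewrite hq -!rmorphM /= -expr2 exprVn rr mulVf ?gt_eqF //.
rewrite trmxC_scale -scalemxAl -scalemxAr !scalerA -!rmorphM /=.
by rewrite -mulrA -expr2 exprVn mulfV ?scale1r // expf_neq0 // gt_eqF.
Qed.

Definition vecT n m (A : 'M[C]_(m, n)) : 'cV[C]_(n * m) :=
  \col_k A (mxtens_unindex k).2 (mxtens_unindex k).1.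

Lemma vecT_index n m (A : 'M[C]_(m, n)) i a : vecT A (mxtens_index (i, a)) 0 = A a i.
Proof. by rewrite mxE mxtens_indexK. Qed.

Lemma coef_vecT n m (A : 'M[C]_(m, n)) : coef_mx (vecT A) = A^T.
Proof. by apply/matrixP => i a; rewrite !mxE mxtens_indexK. Qed.

Lemma coef_scale n m c (psi : 'cV[C]_(n * m)) : coef_mx (c *: psi) = c *: coef_mx psi.
Proof. by apply/matrixP => i a; rewrite !mxE. Qed.

Lemma choi_kraus n m (Phi : 'M[C]_n -> 'M[C]_m) N (A : 'I_N -> 'M[C]_(m, n)) :
  (forall X, Phi X = \sum_(l < N) A l *m X *m (A l)^t*) ->
  choi Phi = \sum_(l < N) vecT (A l) *m (vecT (A l))^t*.
Proof.
move=> hPhi; apply/matrixP => k1 k2.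
rewrite -[k1]mxtens_unindexK -[k2]mxtens_unindexK.
case: (mxtens_unindex k1) => i a; case: (mxtens_unindex k2) => j b.
rewrite choi_entry hPhi !summxE; apply: eq_bigr => l _.
by rewrite kraus_delta_entry outer_entry !vecT_index.
Qed.

Lemma unitarymx1 p : (1%:M : 'M[C]_p) \is unitarymx.
Proof.
by apply/unitarymxP; rewrite mul1mx trmx1 map_mx1.
Qed.

Lemma Valpha_elem n m (alpha : R) (n0 : (0 < n)%N) (m0 : (0 < m)%N) :
  1 <= alpha -> V_alpha alpha
    (delta_mx (mxtens_index (Ordinal n0, Ordinal m0)) (0 : 'I_1) : 'cV[C]_(n * m)).
Proof.
move=> ha; set idx := mxtens_index _; set psi := delta_mx _ _.
split.
  rewrite /unit_vector.
  have -> : psi^t* = delta_mx 0 idx.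
    by apply/matrixP => a b; rewrite !mxE rmorph_nat andbC.
  by rewrite mul_delta_mx mxE !eqxx.
pose s (j : nat) : R := (j == 0%N)%:R.
exists s; split.
  apply/svE; split.
  - move=> i j ij; rewrite /s; case: (j =P 0%N) => [j0|_]; last by rewrite ler0n.
    by move: ij; rewrite j0 leqn0 => /eqP ->.
  - by move=> j; rewrite ler0n.
  - move=> j hj; rewrite /s; case: (j =P 0%N) => // j0; move: hj.
    rewrite j0 leqn0 => /eqP h.
    have : (0 < minn n m)%N by rewrite leq_min n0 m0.
    by rewrite h.
  exists 1%:M, 1%:M; split; [exact: unitarymx1 | exact: unitarymx1|].
  rewrite mul1mx trmx1 map_mx1 mulmx1; apply/matrixP => i a; rewrite !mxE.
  have -> : (mxtens_index (i, a) == idx) = (i == Ordinal n0) && (a == Ordinal m0).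
    by rewrite (inj_eq (can_inj (@mxtens_indexK _ _))) xpair_eqE.
  rewrite /s; case: (i =P Ordinal n0) => [->|hi]; case: (a =P Ordinal m0) => [->|ha'] //=.
  - case: eqP => // h; exfalso; apply: ha'; apply: val_inj; by rewrite /= -h.
  - case: eqP => // h; exfalso; apply: hi; apply: val_inj; exact: h.
  - case: eqP => // h; case: eqP => [h0|_]; last by rewrite rmorph0.
    by exfalso; apply: hi; apply: val_inj; exact: h0.
split.
  move=> j hj; rewrite /s; case: (j =P 0%N) => // j0; move: hj.
  by rewrite j0 ceil_le0 leNgt (lt_le_trans ltr01 ha).
move=> th; have k0 : (0 < Num.truncn alpha)%N by rewrite truncn_gt0.
rewrite /s; case: eqP => [h|_]; first by move: k0; rewrite h.
apply: mulr_ge0; [apply: divr_ge0; [exact: ltW | exact: ler0n] |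
  apply: sumr_ge0 => j _; exact: ler0n].
Qed.

Lemma ii_to_iii n m (alpha : R) (psi0 : 'cV[C]_(n * m)) (Phi : 'M[C]_n -> 'M[C]_m)
  N (A : 'I_N -> 'M[C]_(m, n)) :
  V_alpha alpha psi0 ->
  (forall l, admissible_mx alpha (A l)) ->
  (forall X, Phi X = \sum_(l < N) A l *m X *m (A l)^t*) ->
  exists N' (psi : 'I_N' -> 'cV[C]_(n * m)) (t : 'I_N' -> R),
    (forall l, V_alpha alpha (psi l)) /\ (forall l, 0 < t l) /\
    choi Phi = \sum_(l < N') (t l)%:C *: (psi l *m (psi l) ^t*).
Proof.
move=> h0 hA hPhi.
have hl : forall l, exists tp : R * 'cV[C]_(n * m), [/\ 0 <= tp.1, V_alpha alpha tp.2 &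
    vecT (A l) *m (vecT (A l))^t* = tp.1%:C *: (tp.2 *m tp.2^t*)].
  move=> l; case: (eqVneq (vecT (A l)) 0) => [->|nz].
    by exists (0, psi0); split => //=; rewrite mul0mx scale0r.
  have [r [r0 hu hE]] := normalize nz.
  exists (r ^+ 2, (r^-1)%:C *: vecT (A l)); split => //=; first exact: sqr_ge0.
  split => //; have [s [hs ha]] := hA l.
  exists (fun j => r^-1 * s j); split; last by apply: adm_scale; rewrite // invr_gt0.
  rewrite /schmidt_coefs coef_scale coef_vecT.
  by apply: sv_scale; [rewrite invr_ge0 ltW | exact: sv_tr].
have [f hf] := choice hl.
have [N' [t' [psi' [_ h2 h3 h4]]]] :=
  compress (Q := fun v => V_alpha alpha v) (t := fun l => (f l).1) (psi := fun l => (f l).2)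
    (fun l => let: And3 a _ _ := hf l in a) (fun l => let: And3 _ b _ := hf l in b).
exists N', psi', t'; split => //; split => //.
rewrite (choi_kraus hPhi); move: h4; rewrite /rep => <-.
by apply: eq_bigr => l _; case: (hf l).
Qed.

Lemma iii_to_ii n m (alpha : R) (Phi : {linear 'M[C]_n -> 'M[C]_m})
  N (psi : 'I_N -> 'cV[C]_(n * m)) (t : 'I_N -> R) :
  (forall l, V_alpha alpha (psi l)) -> (forall l, 0 < t l) ->
  choi Phi = \sum_(l < N) (t l)%:C *: (psi l *m (psi l) ^t*) ->
  exists N' (A : 'I_N' -> 'M[C]_(m, n)),
    (forall l, admissible_mx alpha (A l)) /\
    forall X, Phi X = \sum_(l < N') A l *m X *m (A l)^t*.
Proof.
move=> hV ht hC.
pose A l := (Num.sqrt (t l))%:C *: (coef_mx (psi l))^T.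
exists N, A; split.
  move=> l; have [_ [s [hs ha]]] := hV l.
  exists (fun j => Num.sqrt (t l) * s j); split.
    by apply: sv_scale; [exact: sqrtr_ge0 | exact: sv_tr].
  by apply: adm_scale; rewrite // sqrtr_gt0.
move=> X; rewrite lin_expand kraus_expand; apply: eq_bigr => i _.
apply: eq_bigr => j _; congr (_ *: _); apply/matrixP => a b.
rewrite -choi_entry hC !summxE; apply: eq_bigr => l _.
rewrite kraus_delta_entry [LHS]mxE outer_entry /A !mxE rmorphM /= conj_real.
rewrite mulrACA -rmorphM /= -expr2 sqr_sqrtr ?ltW //.
Qed.

End PartA.

Section Cts.
Variable R : realType.
Local Notation C := R[i].
Variable I : eqType.
Local Notation P := (prod_topology (fun _ : I => R)).

Definition ctsR (g : (I -> R) -> R) := continuous (g : P -> R).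

Lemma ctsR_add g h : ctsR g -> ctsR h -> ctsR (fun p => g p + h p).
Proof. move=> hg hh x; exact: (cvgD (hg x) (hh x)). Qed.
Lemma ctsR_mul g h : ctsR g -> ctsR h -> ctsR (fun p => g p * h p).
Proof. move=> hg hh x; exact: (cvgM (hg x) (hh x)). Qed.
Lemma ctsR_opp g : ctsR g -> ctsR (fun p => - g p).
Proof. move=> hg x; exact: (cvgN (hg x)). Qed.
Lemma ctsR_cst c : ctsR (fun _ => c).
Proof. exact: cst_continuous. Qed.
Lemma ctsR_proj i : ctsR (fun p => p i).
Proof. exact: (@proj_continuous I (fun _ => R) i). Qed.
Lemma ctsR_ext g h : (forall p, g p = h p) -> ctsR g -> ctsR h.
Proof. by move=> e; rewrite (_ : g = h) //; apply: funext. Qed.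
Lemma ctsR_sum J (r : seq J) (Q : pred J) (F : J -> (I -> R) -> R) :
  (forall j, ctsR (F j)) -> ctsR (fun p => \sum_(j <- r | Q j) F j p).
Proof.
move=> hF; elim: r => [|x r IH].
  by apply: (ctsR_ext (g := fun _ => 0)) => [p|]; rewrite ?big_nil //; exact: ctsR_cst.
apply: (ctsR_ext (g := fun p => (if Q x then F x p else 0) + \sum_(j <- r | Q j) F j p)).
  by move=> p; rewrite big_cons; case: ifP => _; rewrite ?add0r.
apply: ctsR_add => //; case: (Q x); [exact: hF | exact: ctsR_cst].
Qed.

Definition goodC (g : (I -> R) -> C) :=
  ctsR (fun p => complex.Re (g p)) /\ ctsR (fun p => complex.Im (g p)).

Lemma goodC_ext g h : (forall p, g p = h p) -> goodC g -> goodC h.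
Proof. by move=> e; rewrite (_ : g = h) //; apply: funext. Qed.
Lemma goodC_complex g h : ctsR g -> ctsR h -> goodC (fun p => Complex (g p) (h p)).
Proof. by []. Qed.
Lemma goodC_real g : ctsR g -> goodC (fun p => (g p)%:C).
Proof. by move=> hg; split => //; exact: ctsR_cst. Qed.
Lemma goodC_cst c : goodC (fun _ => c).
Proof. by split; exact: ctsR_cst. Qed.
Lemma goodC_add g h : goodC g -> goodC h -> goodC (fun p => g p + h p).
Proof.
move=> [g1 g2] [h1 h2]; split.
  by apply: (ctsR_ext (g := fun p => complex.Re (g p) + complex.Re (h p))) => [p|];
    [rewrite cRe_add | exact: ctsR_add].
by apply: (ctsR_ext (g := fun p => complex.Im (g p) + complex.Im (h p))) => [p|];
  [rewrite cIm_add | exact: ctsR_add].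
Qed.
Lemma goodC_mul g h : goodC g -> goodC h -> goodC (fun p => g p * h p).
Proof.
move=> [g1 g2] [h1 h2]; split.
  apply: (ctsR_ext (g := fun p => complex.Re (g p) * complex.Re (h p) -
    complex.Im (g p) * complex.Im (h p))) => [p|].
    by case: (g p) => a b; case: (h p).
  by apply: ctsR_add; [exact: ctsR_mul | apply: ctsR_opp; exact: ctsR_mul].
apply: (ctsR_ext (g := fun p => complex.Re (g p) * complex.Im (h p) +
  complex.Im (g p) * complex.Re (h p))) => [p|].
  by case: (g p) => a b; case: (h p).
by apply: ctsR_add; exact: ctsR_mul.
Qed.
Lemma goodC_conj g : goodC g -> goodC (fun p => (g p)^*%R).
Proof.
move=> [g1 g2]; split.
  by apply: (ctsR_ext (g := fun p => complex.Re (g p))) => // p; rewrite cRe_conj.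
by apply: (ctsR_ext (g := fun p => - complex.Im (g p))) => [p|];
  [rewrite cIm_conj | exact: ctsR_opp].
Qed.
Lemma goodC_sum J (r : seq J) (Q : pred J) (F : J -> (I -> R) -> C) :
  (forall j, goodC (F j)) -> goodC (fun p => \sum_(j <- r | Q j) F j p).
Proof.
move=> hF; split.
  apply: (ctsR_ext (g := fun p => \sum_(j <- r | Q j) complex.Re (F j p))).
    by move=> p; rewrite cRe_sum.
  by apply: ctsR_sum => j; case: (hF j).
apply: (ctsR_ext (g := fun p => \sum_(j <- r | Q j) complex.Im (F j p))).
  by move=> p; rewrite cIm_sum.
by apply: ctsR_sum => j; case: (hF j).
Qed.

Definition goodM a b (F : (I -> R) -> 'M[C]_(a, b)) :=
  forall i j, goodC (fun p => F p i j).

Lemma goodM_mul a b c (F : (I -> R) -> 'M[C]_(a, b)) (G : (I -> R) -> 'M[C]_(b, c)) :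
  goodM F -> goodM G -> goodM (fun p => F p *m G p).
Proof.
move=> hF hG i j; apply: (goodC_ext (g := fun p => \sum_k F p i k * G p k j)).
  by move=> p; rewrite mxE.
by apply: goodC_sum => k; apply: goodC_mul.
Qed.
Lemma goodM_trC a b (F : (I -> R) -> 'M[C]_(a, b)) : goodM F -> goodM (fun p => (F p)^t*).
Proof.
move=> hF i j; apply: (goodC_ext (g := fun p => (F p j i)^*%R)); first by move=> p; rewrite !mxE.
exact: goodC_conj.
Qed.
Lemma goodM_scale a b g (F : (I -> R) -> 'M[C]_(a, b)) :
  goodC g -> goodM F -> goodM (fun p => g p *: F p).
Proof.
move=> hg hF i j; apply: (goodC_ext (g := fun p => g p * F p i j)); first by move=> p; rewrite !mxE.
exact: goodC_mul.
Qed.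
Lemma goodM_sum a b J (r : seq J) (Q : pred J) (F : J -> (I -> R) -> 'M[C]_(a, b)) :
  (forall j, goodM (F j)) -> goodM (fun p => \sum_(j <- r | Q j) F j p).
Proof.
move=> hF i k; apply: (goodC_ext (g := fun p => \sum_(j <- r | Q j) F j p i k)).
  by move=> p; rewrite summxE.
by apply: goodC_sum => j; exact: hF.
Qed.

Local Open Scope classical_set_scope.

Lemma closed_leR g h : ctsR g -> ctsR h -> closed [set p : P | g p <= h p].
Proof.
move=> hg hh.
have -> : [set p : P | g p <= h p] = (fun p => h p - g p) @^-1` [set x : R | 0 <= x].
  by apply/seteqP; split => p /=; rewrite subr_ge0.
apply: preimage_closed; last exact: closed_ge.
move=> x _; apply: ctsR_add => //; exact: ctsR_opp.
Qed.

Lemma closed_eqR g h : ctsR g -> ctsR h -> closed [set p : P | g p = h p].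
Proof.
move=> hg hh.
have -> : [set p : P | g p = h p] = (fun p => h p - g p) @^-1` [set x : R | x = 0].
  by apply/seteqP; split => p /=; [move=> -> ; rewrite subrr | move/eqP; rewrite subr_eq0 => /eqP].
apply: preimage_closed; last exact: closed_eq.
move=> x _; apply: ctsR_add => //; exact: ctsR_opp.
Qed.

Lemma closed_eqC g h : goodC g -> goodC h -> closed [set p : P | g p = h p].
Proof.
move=> [g1 g2] [h1 h2].
have -> : [set p : P | g p = h p] = [set p : P | complex.Re (g p) = complex.Re (h p)] `&`
    [set p : P | complex.Im (g p) = complex.Im (h p)].
  apply/seteqP; split => p /=; first by move=> ->.
  by case=> e1 e2; apply: complex_ext.
by apply: closedI; apply: closed_eqR.
Qed.

Lemma closed_forall J (A : J -> set P) : (forall j, closed (A j)) ->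
  closed [set p : P | forall j, A j p].
Proof.
move=> hA p hp j; apply: (hA j); move=> B hB.
have [q [hq1 hq2]] := hp B hB; by exists q; split => //; exact: hq1.
Qed.

Lemma closed_and (A B : set P) : closed A -> closed B -> closed [set p | A p /\ B p].
Proof. exact: closedI. Qed.

Lemma closed_impl (Cd : Prop) (A : set P) : closed A -> closed [set p | Cd -> A p].
Proof.
move=> hA; case: (pselect Cd) => hC.
  by rewrite (_ : [set p | Cd -> A p] = A) //; apply/seteqP; split => p /=; auto.
have -> : [set p | Cd -> A p] = setT.
  by apply/seteqP; split => // p _ hc; exfalso; exact: hC hc.
exact: closedT.
Qed.

Lemma closed_eqM a b (F G : (I -> R) -> 'M[C]_(a, b)) : goodM F -> goodM G ->
  closed [set p : P | F p = G p].
Proof.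
move=> hF hG.
have -> : [set p : P | F p = G p] = [set p : P | forall i j, F p i j = G p i j].
  by apply/seteqP; split => p /=; [move=> -> | move=> h; apply/matrixP].
apply: closed_forall => i; apply: closed_forall => j; exact: closed_eqC.
Qed.

End Cts.

Section Params.
Variables (R : realType) (n m : nat) (alpha : R) (D : nat).
Local Notation C := R[i].
Local Notation d := (minn n m).
Local Notation I := ('I_D * ((('I_n * 'I_n * bool) + ('I_m * 'I_m * bool)) + ('I_d + unit)))%type.
Local Notation P := (prod_topology (fun _ : I => R)).

Definition pt (p : I -> R) l := p (l, inr (inr tt)).
Definition pU (p : I -> R) l : 'M[C]_n :=
  \matrix_(a, b) Complex (p (l, inl (inl (a, b, true)))) (p (l, inl (inl (a, b, false)))).
Definition pV (p : I -> R) l : 'M[C]_m :=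
  \matrix_(a, b) Complex (p (l, inl (inr (a, b, true)))) (p (l, inl (inr (a, b, false)))).
Definition ps (p : I -> R) l (j : nat) : R := \sum_(i < d | (i : nat) == j) p (l, inr (inl i)).
Definition pM (p : I -> R) l : 'M[C]_(n, m) := pU p l *m diagsv n m (ps p l) *m (pV p l)^t*.
Definition pPsi (p : I -> R) l : 'cV[C]_(n * m) :=
  \col_k pM p l (mxtens_unindex k).1 (mxtens_unindex k).2.
Definition fY (p : I -> R) := rep (pt p) (pPsi p).

Definition cons1 (p : I -> R) l : Prop :=
  0 <= pt p l /\ (pU p l *m (pU p l)^t* = 1%:M /\ (pV p l *m (pV p l)^t* = 1%:M /\
  ((forall i j : nat, (i <= j)%N -> ps p l j <= ps p l i) /\ ((forall j, 0 <= ps p l j) /\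
  (admissible_seq alpha (ps p l) /\ sqn (pPsi p l) = 1))))).

Lemma ctsR_ps l j : ctsR (fun p : I -> R => ps p l j).
Proof. by apply: ctsR_sum => i; exact: ctsR_proj. Qed.

Lemma goodM_pU l : goodM (fun p : I -> R => pU p l).
Proof.
move=> a b; apply: (goodC_ext (g := fun p : I -> R =>
  Complex (p (l, inl (inl (a, b, true)))) (p (l, inl (inl (a, b, false)))))).
  by move=> p; rewrite mxE.
by apply: goodC_complex; exact: ctsR_proj.
Qed.

Lemma goodM_pV l : goodM (fun p : I -> R => pV p l).
Proof.
move=> a b; apply: (goodC_ext (g := fun p : I -> R =>
  Complex (p (l, inl (inr (a, b, true)))) (p (l, inl (inr (a, b, false)))))).
  by move=> p; rewrite mxE.
by apply: goodC_complex; exact: ctsR_proj.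
Qed.

Lemma goodM_cst a b (M : 'M[C]_(a, b)) : goodM (fun _ : I -> R => M).
Proof. by move=> i j; exact: goodC_cst. Qed.

Lemma goodM_diag l : goodM (fun p : I -> R => diagsv n m (ps p l)).
Proof.
move=> i j; apply: (goodC_ext (g := fun p : I -> R =>
  if (i == j :> nat) then (ps p l i)%:C else 0)).
  by move=> p; rewrite mxE.
case: (i == j :> nat); [apply: goodC_real; exact: ctsR_ps | exact: goodC_cst].
Qed.

Lemma goodM_pM l : goodM (fun p : I -> R => pM p l).
Proof.
apply: goodM_mul; last exact/goodM_trC/goodM_pV.
apply: goodM_mul; [exact: goodM_pU | exact: goodM_diag].
Qed.

Lemma goodM_pPsi l : goodM (fun p : I -> R => pPsi p l).
Proof.
move=> k j; apply: (goodC_ext (g := fun p : I -> R =>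
  pM p l (mxtens_unindex k).1 (mxtens_unindex k).2)).
  by move=> p; rewrite /pPsi mxE.
exact: (goodM_pM l (mxtens_unindex k).1 (mxtens_unindex k).2).
Qed.

Lemma goodM_fY : goodM fY.
Proof.
apply: goodM_sum => l; apply: goodM_scale.
  by apply: goodC_real; exact: ctsR_proj.
apply: goodM_mul; [exact: goodM_pPsi | exact/goodM_trC/goodM_pPsi].
Qed.

Local Open Scope classical_set_scope.

Lemma closed_cons1 l : closed [set p : P | cons1 p l].
Proof.
apply: closed_and.
  by apply: closed_leR; [exact: ctsR_cst | exact: ctsR_proj].
apply: closed_and.
  apply: closed_eqM; last exact: goodM_cst.
  by apply: goodM_mul; [exact: goodM_pU | exact/goodM_trC/goodM_pU].
apply: closed_and.
  apply: closed_eqM; last exact: goodM_cst.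
  by apply: goodM_mul; [exact: goodM_pV | exact/goodM_trC/goodM_pV].
apply: closed_and.
  apply: closed_forall => i; apply: closed_forall => j; apply: closed_impl.
  by apply: closed_leR; exact: ctsR_ps.
apply: closed_and.
  apply: closed_forall => j; apply: closed_leR; [exact: ctsR_cst | exact: ctsR_ps].
apply: closed_and.
  apply: closed_and.
    apply: closed_forall => j; apply: closed_impl.
    apply: closed_eqR; [exact: ctsR_ps | exact: ctsR_cst].
  apply: closed_impl; apply: closed_leR; first exact: ctsR_ps.
  apply: ctsR_mul; first exact: ctsR_cst.
  by apply: ctsR_sum => j; exact: ctsR_ps.
apply: closed_eqC; last exact: goodC_cst.
apply: (goodC_ext (g := fun p : I -> R => \sum_k ((pPsi p l) k 0)^*%R * (pPsi p l) k 0)).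
  by move=> p; rewrite sqnE.
by apply: goodC_sum => k; apply: goodC_mul; [apply: goodC_conj|]; exact: goodM_pPsi.
Qed.

Lemma coef_pPsi p l : coef_mx (pPsi p l) = pM p l.
Proof. by apply/matrixP => i a; rewrite !mxE mxtens_indexK. Qed.

Lemma ps_big p l j : (d <= j)%N -> ps p l j = 0.
Proof.
move=> hj; rewrite /ps big1 // => i /eqP hi.
by move: (ltn_ord i); rewrite hi ltnNge hj.
Qed.

Lemma cons_V p l : cons1 p l -> V_alpha alpha (pPsi p l).
Proof.
move=> [_ [hU [hV [h1 [h2 [ha hu]]]]]]; split; first exact: hu.
exists (ps p l); split => //; apply/svE; split => //.
  by move=> j hj; exact: ps_big.
exists (pU p l), (pV p l); split; [exact/unitarymxP | exact/unitarymxP |].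
by rewrite coef_pPsi.
Qed.

End Params.

Section Bounds.
Variable R : realType.
Local Notation C := R[i].

Lemma norm_le1_of_sum K (z : 'I_K -> C) :
  \sum_k z k * (z k)^*%R = 1 -> forall k, `|z k| <= 1.
Proof.
move=> h k; rewrite -(@expr_le1 _ 2) // normCK.
rewrite -h (bigD1 k) //= lerDl sumr_ge0 // => j _; exact: mul_conjC_ge0.
Qed.

Lemma unitary_entry_le1 p (U : 'M[C]_p) : U *m U^t* = 1%:M -> forall a b, `|U a b| <= 1.
Proof.
move=> hU a; apply: norm_le1_of_sum.
have := congr1 (fun M : 'M[C]_p => M a a) hU; rewrite !mxE eqxx mulr1n => <-.
by apply: eq_bigr => j _; rewrite !mxE.
Qed.

Lemma sqn_entry_le1 K (u : 'cV[C]_K) : sqn u = 1 -> forall k, `|u k 0| <= 1.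
Proof.
rewrite sqnE => h; apply: (norm_le1_of_sum (z := fun k => u k 0)).
by rewrite -h; apply: eq_bigr => k _; rewrite mulrC.
Qed.

Lemma Re_le_norm (z : C) : (`|complex.Re z|)%:C <= `|z|.
Proof. exact: normc_ge_Re. Qed.

Lemma Im_le_norm (z : C) : (`|complex.Im z|)%:C <= `|z|.
Proof.
rewrite normc_def lecR -sqrtr_sqr ler_sqrt ?addr_ge0 ?sqr_ge0 //.
by rewrite lerDr sqr_ge0.
Qed.

Lemma ReIm_le1 (z : C) : `|z| <= 1 -> `|complex.Re z| <= 1 /\ `|complex.Im z| <= 1.
Proof.
move=> h; split; rewrite -lecR.
  exact: le_trans (Re_le_norm z) h.
exact: le_trans (Im_le_norm z) h.
Qed.

Lemma sv_le n m (A : 'M[C]_(n, m)) s (U : 'M[C]_n) (V : 'M[C]_m) :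
  U \is unitarymx -> V \is unitarymx -> A = U *m diagsv n m s *m V^t* ->
  (forall a b, `|A a b| <= 1) -> (forall j, 0 <= s j) ->
  forall j, (j < minn n m)%N -> s j <= (n * m)%:R.
Proof.
move=> /unitarymxP hU /unitarymxP hV hA hAb hs0 j hj.
have jn : (j < n)%N by move: hj; rewrite leq_min => /andP[].
have jm : (j < m)%N by move: hj; rewrite leq_min => /andP[].
have hU' := mulmx1C hU; have hV' := mulmx1C hV.
have E : (s j)%:C = (U^t* *m A *m V) (Ordinal jn) (Ordinal jm).
  rewrite hA !mulmxA hU' mul1mx -mulmxA hV' mulmx1 mxE /=.
  by rewrite eqxx.
have hUb a b : `|U a b| <= 1 by apply: unitary_entry_le1.
have hVb a b : `|V a b| <= 1 by apply: unitary_entry_le1.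
rewrite -lecR.
rewrite -[X in X <= _](ger0_norm (x := (s j)%:C)); last by rewrite lecR.
rewrite E mxE.
have -> : ((n * m)%:R)%:C = \sum_(b < m) \sum_(a < n) (1 : C).
  rewrite !sumr_const !card_ord -mulrnA mulnC.
  by rewrite rmorph_nat.
apply: le_trans (ler_norm_sum _ _ _) _; apply: ler_sum => b _.
rewrite normrM; apply: le_trans (_ : `|(U ^t* *m A) (Ordinal jn) b| * 1 <= _).
  by rewrite ler_wpM2l.
rewrite mulr1 mxE; apply: le_trans (ler_norm_sum _ _ _) _; apply: ler_sum => a _.
rewrite normrM mxE norm_conjC mxE.
by apply: mulr_ile1; rewrite ?normr_ge0 ?hUb ?hAb.
Qed.

End Bounds.

Section Extract.
Variables (R : realType) (n m : nat) (alpha : R) (D : nat).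
Local Notation C := R[i].
Local Notation d := (minn n m).
Local Notation I := ('I_D * ((('I_n * 'I_n * bool) + ('I_m * 'I_m * bool)) + ('I_d + unit)))%type.

Lemma extract (t : 'I_D -> R) (psi : 'I_D -> 'cV[C]_(n * m)) (Bt : R) :
  0 <= Bt -> (forall l, 0 <= t l) -> (forall l, t l <= Bt) ->
  (forall l, V_alpha alpha (psi l)) ->
  exists p : I -> R, [/\ (forall l, cons1 alpha p l), fY p = rep t psi &
    (forall x, `|p x| <= Bt + (n * m)%:R + 1)].
Proof.
move=> Bt0 ht0 htB hV.
have hl : forall l, exists x : (nat -> R) * ('M[C]_n * 'M[C]_m),
    [/\ singular_values (coef_mx (psi l)) x.1, admissible_seq alpha x.1,
     x.2.1 \is unitarymx, x.2.2 \is unitarymx &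
     coef_mx (psi l) = x.2.1 *m diagsv n m x.1 *m x.2.2^t*].
  move=> l; have [_ [s [hs ha]]] := hV l.
  have /svE [_ _ _ [U [V [hU hV' hA]]]] := hs.
  by exists (s, (U, V)); split.
have [f hf] := choice hl.
pose p : I -> R := fun x => match x with
  | (l, inl (inl (a, b, true))) => complex.Re ((f l).2.1 a b)
  | (l, inl (inl (a, b, false))) => complex.Im ((f l).2.1 a b)
  | (l, inl (inr (a, b, true))) => complex.Re ((f l).2.2 a b)
  | (l, inl (inr (a, b, false))) => complex.Im ((f l).2.2 a b)
  | (l, inr (inl i)) => (f l).1 i
  | (l, inr (inr _)) => t l
  end.
have hpU l : pU p l = (f l).2.1.
  by apply/matrixP => a b; rewrite mxE /=; case: ((f l).2.1 a b).
have hpV l : pV p l = (f l).2.2.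
  by apply/matrixP => a b; rewrite mxE /=; case: ((f l).2.2 a b).
have hps l : ps p l = (f l).1.
  apply: funext => j; case: (hf l) => /svE [_ _ hz _] _ _ _ _.
  case: (ltnP j d) => hj; last by rewrite ps_big // hz.
  by rewrite /ps (big_pred1 (Ordinal hj)) //= => i /=.
have hpM l : pM p l = coef_mx (psi l).
  by rewrite /pM hpU hpV hps; case: (hf l) => _ _ _ _ ->.
have hpPsi l : pPsi p l = psi l.
  apply/matrixP => k z; rewrite (ord1 z) mxE hpM mxE.
  by rewrite -surjective_pairing mxtens_unindexK.
exists p; split.
- move=> l; case: (hf l) => /svE [h1 h2 _ _] ha hU hV' _.
  split; first exact: ht0.
  split; first by rewrite hpU; exact/unitarymxP.
  split; first by rewrite hpV; exact/unitarymxP.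
  rewrite hps hpPsi; do 3 (split => //).
  by case: (hV l).
- by rewrite /fY /rep; apply: eq_bigr => l _; rewrite hpPsi.
have h1 : 1 <= Bt + (n * m)%:R + 1 by apply: ler_wpDl => //; rewrite addr_ge0.
case=> l [[[[a b] []]|[[a b] []]]|[i|[]]] /=.
- case: (hf l) => _ _ hU _ _.
  apply: le_trans h1; case: (ReIm_le1 (unitary_entry_le1 (unitarymxP hU) a b)) => //.
- case: (hf l) => _ _ hU _ _.
  apply: le_trans h1; case: (ReIm_le1 (unitary_entry_le1 (unitarymxP hU) a b)) => //.
- case: (hf l) => _ _ _ hU _.
  apply: le_trans h1; case: (ReIm_le1 (unitary_entry_le1 (unitarymxP hU) a b)) => //.
- case: (hf l) => _ _ _ hU _.
  apply: le_trans h1; case: (ReIm_le1 (unitary_entry_le1 (unitarymxP hU) a b)) => //.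
- case: (hf l) => /svE [_ h2 _ _] _ hU hV' hA.
  rewrite ger0_norm //; apply: le_trans (_ : (n * m)%:R <= _).
    apply: (sv_le hU hV' hA) => //.
    move=> a b; rewrite mxE; apply: sqn_entry_le1; by case: (hV l).
  by apply: ler_wpDr => //; apply: ler_wpDl.
- by rewrite ger0_norm //; apply: ler_wpDr => //; apply: ler_wpDr.
Qed.

End Extract.

Section Aux.
Variable R : realType.
Local Notation C := R[i].

Lemma trace_outer K (u : 'cV[C]_K) : \tr (u *m u^t*) = sqn u.
Proof. by rewrite mxtrace_mulC /mxtrace big_ord1. Qed.

Lemma trace_rep K N (t : 'I_N -> R) (psi : 'I_N -> 'cV[C]_K) :
  (forall l, sqn (psi l) = 1) -> \tr (rep t psi) = \sum_l (t l)%:C.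
Proof.
move=> h; rewrite /rep /mxtrace.
under eq_bigr => i _ do rewrite summxE.
rewrite exchange_big; apply: eq_bigr => l _.
under eq_bigr => i _ do rewrite mxE.
rewrite -mulr_sumr; have := trace_outer (psi l); rewrite /mxtrace => ->.
by rewrite h mulr1.
Qed.

Lemma pad K (Q : 'cV[C]_K -> Prop) N N' (t : 'I_N -> R) (psi : 'I_N -> 'cV[C]_K)
  (psi0 : 'cV[C]_K) : (N <= N')%N -> Q psi0 -> (forall l, 0 <= t l) ->
  (forall l, Q (psi l)) ->
  exists (t2 : 'I_N' -> R) (psi2 : 'I_N' -> 'cV[C]_K),
    [/\ forall l, 0 <= t2 l, forall l, Q (psi2 l) & rep t psi = rep t2 psi2].
Proof.
move=> hN hQ0 ht hQ.
pose t2 (l : 'I_N') : R := oapp t 0 (insub (val l) : option 'I_N).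
pose psi2 (l : 'I_N') := oapp psi psi0 (insub (val l) : option 'I_N).
exists t2, psi2; split.
- by move=> l; rewrite /t2; case: insubP => [j _ _|_] /=.
- by move=> l; rewrite /psi2; case: insubP => [j _ _|_] /=.
pose H (i : nat) : 'M[C]_K :=
  if (insub i : option 'I_N) is Some j then (t j)%:C *: (psi j *m (psi j)^t*) else 0.
transitivity (\sum_(i < N) H i).
  by apply: eq_bigr => i _; rewrite /H valK.
rewrite (big_ord_widen _ _ hN) big_mkcond; apply: eq_bigr => l _.
rewrite /H /t2 /psi2; case: insubP => [j hj _|hj] /=; first by rewrite hj.
by rewrite (negbTE hj) rmorph0 scale0r.
Qed.

Lemma cRe_sub (x y : C) : complex.Re (x - y) = complex.Re x - complex.Re y.
Proof. by case: x; case: y. Qed.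
Lemma cIm_sub (x y : C) : complex.Im (x - y) = complex.Im x - complex.Im y.
Proof. by case: x; case: y. Qed.

Lemma aux_lt (a b e : R) : -e < a - b -> b < a + e.
Proof. by move=> h; rewrite -subr_gt0 (addrAC a e (-b)) -[e]opprK subr_gt0. Qed.

Lemma small_eq0 (r : R) : (forall e, 0 < e -> -e <= r /\ r <= e) -> r = 0.
Proof.
move=> h; apply/normr0_eq0/eqP; rewrite eq_le normr_ge0 andbT.
apply/ler_addgt0Pr => e e0; rewrite add0r ler_norml.
by have [h1 h2] := h e e0; rewrite h1 h2.
Qed.

End Aux.

Section Main.
Variables (R : realType) (n m : nat) (alpha : R).
Local Notation C := R[i].
Local Notation NN := (n * m)%N.
Local Notation D := (NN * NN)%N.
Local Notation d := (minn n m).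
Local Notation I := ('I_D * ((('I_n * 'I_n * bool) + ('I_m * 'I_m * bool)) + ('I_d + unit)))%type.
Local Notation P := (prod_topology (fun _ : I => R)).
Local Open Scope classical_set_scope.

Lemma goodC_opp (I0 : eqType) (g : (I0 -> R) -> C) : goodC g -> goodC (fun p => - g p).
Proof.
move=> hg; apply: (goodC_ext (g := fun p => (-1) * g p)); first by move=> p; rewrite mulN1r.
by apply: goodC_mul => //; exact: goodC_cst.
Qed.

Lemma Kalpha_rep (X : 'M[C]_NN) : (0 < n)%N -> (0 < m)%N -> 1 <= alpha ->
  K_alpha alpha X ->
  exists N (t : 'I_N -> R) (psi : 'I_N -> 'cV[C]_NN),
    [/\ (N <= D)%N, forall l, 0 <= t l, forall l, V_alpha alpha (psi l) & X = rep t psi].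
Proof.
move=> n0 m0 ha hK.
have hpsi0 := Valpha_elem n0 m0 ha.
pose Bt := `|complex.Re (\tr X)| + NN%:R.
pose Bnd := Bt + NN%:R + 1.
have Bt0 : 0 <= Bt by rewrite addr_ge0.
pose S : set P := [set p | (forall x, -Bnd <= p x /\ p x <= Bnd) /\
  forall l, cons1 alpha p l].
pose Se (e : R) : set P := [set p | S p /\ forall i j,
  (-e <= complex.Re (X i j - fY p i j) /\ complex.Re (X i j - fY p i j) <= e) /\
  (-e <= complex.Im (X i j - fY p i j) /\ complex.Im (X i j - fY p i j) <= e)].
have approx e : 0 < e -> exists p, Se e p.
  move=> e0; pose eps := Num.min e 1.
  have eps0 : 0 < eps by rewrite lt_min e0 ltr01.
  have [Y [[N [t [psi [t0 [hV EY]]]]] hY]] := hK eps eps0.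
  have [N1 [t1 [psi1 [hN1 t10 hV1 E1]]]] :=
    caratheodory (Q := fun v => V_alpha alpha v) t0 hV.
  have [t2 [psi2 [t20 hV2 E2]]] := pad hN1 hpsi0 t10 hV1.
  have hYR : Y = rep t2 psi2 by rewrite -E2 -E1 EY.
  have hRe k1 k2 : `|complex.Re (X k1 k2 - Y k1 k2)| < eps.
    by rewrite -ltcR (le_lt_trans (Re_le_norm _)) // hY.
  have hIm k1 k2 : `|complex.Im (X k1 k2 - Y k1 k2)| < eps.
    by rewrite -ltcR (le_lt_trans (Im_le_norm _)) // hY.
  have htB l : t2 l <= Bt.
    have htr : (\sum_l (t2 l))%:C = \tr Y.
      by rewrite hYR trace_rep ?rmorph_sum // => l'; case: (hV2 l').
    have hsum : \sum_l t2 l = complex.Re (\tr Y) by rewrite -htr.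
    apply: le_trans (_ : \sum_l t2 l <= _).
      by rewrite (bigD1 l) //= lerDl sumr_ge0.
    rewrite hsum /Bt /mxtrace cRe_sum.
    apply: le_trans (_ : \sum_(k < NN) (complex.Re (X k k) + 1) <= _).
      apply: ler_sum => k _.
      have := hRe k k; rewrite cRe_sub ltr_norml => /andP[h1 h2].
      have he : eps <= 1 by rewrite ge_min lexx orbT.
      apply: ltW; apply: (lt_le_trans (aux_lt h1)); by rewrite lerD2l.
    rewrite big_split /= sumr_const card_ord -cRe_sum.
    by rewrite lerD2r real_ler_norm // num_real.
  have [p [hc hf hb]] := extract Bt0 t20 htB hV2.
  exists p; split.
    split => // x; have := hb x; rewrite ler_norml => /andP[] //.
  move=> i j; rewrite hf -hYR.
  have he : eps <= e by rewrite ge_min lexx.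
  have := hRe i j; have := hIm i j; rewrite !ltr_norml => /andP[h1 h2] /andP[h3 h4].
  split; split; apply: ltW.
  - by apply: le_lt_trans h3; rewrite lerN2.
  - exact: lt_le_trans h4 he.
  - by apply: le_lt_trans h1; rewrite lerN2.
  - exact: lt_le_trans h2 he.
have Sclosed : closed S.
  apply: closed_and.
    apply: closed_forall => x; apply: closed_and.
      by apply: closed_leR; [exact: ctsR_cst | exact: ctsR_proj].
    by apply: closed_leR; [exact: ctsR_proj | exact: ctsR_cst].
  by apply: closed_forall => l; exact: closed_cons1.
have Scompact : compact S.
  have hbox : compact (T := P) [set f : P | forall i, `[-Bnd, Bnd]%classic (f i)].
    exact: (@tychonoff I (fun _ => R) (fun _ => `[-Bnd, Bnd]%classic)
      (fun _ => @segment_compact R (-Bnd) Bnd)).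
  apply: (subclosed_compact Sclosed hbox).
  move=> p [hp _] x; have [h1 h2] := hp x.
  by rewrite /= in_itv /= h1 h2.
have goodD i j : goodC (fun p : I -> R => X i j - fY p i j).
  apply: goodC_add; first exact: goodC_cst.
  apply: goodC_opp; exact: goodM_fY.
have Seclosed e : closed (Se e).
  apply: closed_and => //.
  apply: closed_forall => i; apply: closed_forall => j.
  have [g1 g2] := goodD i j.
  apply: closed_and; apply: closed_and.
  - by apply: closed_leR => //; exact: ctsR_cst.
  - by apply: closed_leR => //; exact: ctsR_cst.
  - by apply: closed_leR => //; exact: ctsR_cst.
  - by apply: closed_leR => //; exact: ctsR_cst.
pose F := filter_from [set e : R | 0 < e] Se.
have FF : Filter F.
  apply: filter_from_filter; first by exists 1; rewrite /= ltr01.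
  move=> e1 e2 h1 h2; exists (Num.min e1 e2); first by rewrite /= lt_min h1 h2.
  move=> p [Sp hp]; have le1 : Num.min e1 e2 <= e1 by rewrite ge_min lexx.
  have le2 : Num.min e1 e2 <= e2 by rewrite ge_min lexx orbT.
  split; split => // i j; have [[a1 a2] [a3 a4]] := hp i j; split; split.
  all: try (apply: le_trans a2 _; assumption).
  all: try (apply: le_trans a4 _; assumption).
  all: try (apply: le_trans _ a1; rewrite lerN2; assumption).
  all: try (apply: le_trans _ a3; rewrite lerN2; assumption).
have PF : ProperFilter F.
  apply: filter_from_proper => e he; have [p hp] := approx e he; by exists p.
have FS : F S by exists 1; [rewrite /= ltr01 | move=> p []].
have [p [Sp clp]] := Scompact F PF FS.
have hSe e : 0 < e -> Se e p.
  move=> e0; apply: (Seclosed e) => B hB; apply: clp => //; by exists e.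
have EX : X = fY p.
  apply/matrixP => i j; apply: complex_ext; apply/eqP; rewrite -subr_eq0; apply/eqP.
    rewrite -cRe_sub; apply: small_eq0 => e e0; have [_ h] := hSe e e0.
    by case: (h i j) => [[]].
  rewrite -cIm_sub; apply: small_eq0 => e e0; have [_ h] := hSe e e0.
  by case: (h i j) => _ [].
case: Sp => _ hcons.
exists D, (pt p), (pPsi p); split => //.
- by move=> l; case: (hcons l).
- by move=> l; apply: cons_V; exact: hcons.
Qed.

End Main.

Theorem theorem3p19 (R : realType) (n m : nat) (alpha : R)
  (halpha : 1 <= alpha <= (minn n m)%:R)
  (Phi : {linear 'M[R[i]]_n -> 'M[R[i]]_m}) :
  [/\
   (* (i) <-> (ii) *)
   K_alpha alpha (choi Phi) <->
     (exists (N : nat) (A : 'I_N -> 'M[R[i]]_(m, n)),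
        (forall l, admissible_mx alpha (A l)) /\
        forall X : 'M[R[i]]_n, Phi X = \sum_(l < N) A l *m X *m (A l) ^t*),
   (* (i) <-> (iii) *)
   K_alpha alpha (choi Phi) <->
     (exists (N : nat) (psi : 'I_N -> 'cV[R[i]]_(n * m)) (t : 'I_N -> R),
        (forall l, V_alpha alpha (psi l)) /\ (forall l, 0 < t l) /\
        choi Phi = \sum_(l < N) (t l)%:C *: (psi l *m (psi l) ^t*))
   & (* moreover, N <= (nm)^2 can be achieved in (iii) *)
   K_alpha alpha (choi Phi) ->
     (exists (N : nat) (psi : 'I_N -> 'cV[R[i]]_(n * m)) (t : 'I_N -> R),
        (N <= (n * m) ^ 2)%N /\
        (forall l, V_alpha alpha (psi l)) /\ (forall l, 0 < t l) /\
        choi Phi = \sum_(l < N) (t l)%:C *: (psi l *m (psi l) ^t*))].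
Proof.
have [ha1 had] : 1 <= alpha /\ alpha <= (minn n m)%:R by move/andP: halpha.
have hd : (0 < minn n m)%N by rewrite -(@ler1n R); apply: le_trans had.
have n0 : (0 < n)%N by move: hd; rewrite leq_min => /andP[].
have m0 : (0 < m)%N by move: hd; rewrite leq_min => /andP[].
have hpsi0 := Valpha_elem n0 m0 ha1.
have i_iii : K_alpha alpha (choi Phi) ->
    exists (N : nat) (psi : 'I_N -> 'cV[R[i]]_(n * m)) (t : 'I_N -> R),
        (N <= (n * m) ^ 2)%N /\
        (forall l, V_alpha alpha (psi l)) /\ (forall l, 0 < t l) /\
        choi Phi = \sum_(l < N) (t l)%:C *: (psi l *m (psi l) ^t*).
  move=> hK; have [N [t [psi [hN t0 hV E]]]] := Kalpha_rep n0 m0 ha1 hK.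
  have [N' [t' [psi' [hN' t'0 hV' E']]]] :=
    compress (Q := fun v => V_alpha alpha v) t0 hV.
  exists N', psi', t'; split; first by rewrite -mulnn (leq_trans hN').
  by split => //; split => //; rewrite E E'.
have iii_i : (exists (N : nat) (psi : 'I_N -> 'cV[R[i]]_(n * m)) (t : 'I_N -> R),
        (forall l, V_alpha alpha (psi l)) /\ (forall l, 0 < t l) /\
        choi Phi = \sum_(l < N) (t l)%:C *: (psi l *m (psi l) ^t*)) ->
    K_alpha alpha (choi Phi).
  move=> [N [psi [t [hV [ht E]]]]] eps eps0; exists (choi Phi); split.
    by exists N, t, psi; split => // l; exact: ltW.
  by move=> i j; rewrite subrr normr0 ltcR.
split.
- split.
    move=> /i_iii [N [psi [t [_ [hV [ht E]]]]]].
    exact: iii_to_ii hV ht E.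
  move=> [N [A [hA hK]]]; apply: iii_i.
  exact: ii_to_iii hpsi0 hA hK.
- split => [/i_iii [N [psi [t [_ h]]]]|]; last exact: iii_i.
  by exists N, psi, t.
- exact: i_iii.
Qed.
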